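(* Let $(S,\ast)$ be an adequate partial semigroup and let $p\in\delta S$. Then $p$ is an idempotent if and only if for each $A\in p$ there is a nonempty set $T$ of functions such that (a) for all $f\in T$, $\mathrm{domain}(f)\in\omega$ and $\mathrm{range}(f)\subseteq A$; (b) for all $f\in T$, $B_f(T)\in p$; (c) for all $f\in T$ and all $x\in B_f(T)$, $B_{f^\frown x}(T)\subseteq x^{-1}B_f(T)$.
   Context: A partial semigroup is a pair $(S,\ast)$ where $\ast$ is an operation defined on a subset of $S\times S$ such that $(x\ast y)\ast z=x\ast(y\ast z)$ in the sense that if either side is defined, so is the other and they are equal. $\phi_S(s)=\{t: s\ast t\text{ defined}\}$, $\sigma_S(H)=\bigcap_{s\in H}\phi_S(s)$ for finite nonempty $H\subseteq S$; $S$ is adequate if all $\sigma_S(H)\ne\emptyset$. $\delta S=\bigcap_{x\in S}\overline{\phi_S(x)}$ is the set of ultrafilters on $S$ containing every $\phi_S(x)$, with operation $p\ast q=\{A\subseteq S:\{s: s^{-1}A\in q\}\in p\}$, where $s^{-1}A=\{t\in\phi_S(s): s\ast t\in A\}$; this makes $\delta S$ a semigroup. $\omega$ is the first infinite ordinal, each ordinal being the set of its predecessors, so $[n]=\{0,\dots,n-1\}$. For a function $f$ with domain $[n]\in\omega$ and $x\in S$, $f^\frown x=f\cup\{(n,x)\}$ (domain $[n+1]$, with $f^\frown x(n)=x$). For a set $T$ of functions with domains in $\omega$ and values in $S$, and $f\in T$, $B_f(T)=\{x: f^\frown x\in T\}$. *)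

(* Defs.v *)
From Stdlib Require Import List.
Import ListNotations.

(* A partial semigroup: a type S with a partial operation op : S -> S -> option S
   (op x y = None means x*y undefined).  Associativity in the strong sense:
   (x*y)*z is defined iff x*(y*z) is defined, and then they are equal. *)
Definition pbind {S : Type} (o : option S) (k : S -> option S) : option S :=
  match o with Some a => k a | None => None end.

Definition partial_assoc {S : Type} (op : S -> S -> option S) : Prop :=
  forall x y z : S,
    pbind (op x y) (fun xy => op xy z) = pbind (op y z) (fun yz => op x yz).

Definition phi {S : Type} (op : S -> S -> option S) (s : S) : S -> Prop :=
  fun t => op s t <> None.

(* sigma_S(H) for a finite nonempty H, given as a nonempty list of its elements *)
Definition sigma {S : Type} (op : S -> S -> option S) (H : list S) : S -> Prop :=
  fun t => forall s, In s H -> phi op s t.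

Definition adequate {S : Type} (op : S -> S -> option S) : Prop :=
  forall H : list S, H <> [] -> exists t, sigma op H t.

Definition subset {S : Type} (A B : S -> Prop) : Prop := forall x, A x -> B x.

Definition ultrafilter {S : Type} (p : (S -> Prop) -> Prop) : Prop :=
  p (fun _ => True) /\
  ~ p (fun _ => False) /\
  (forall A B, p A -> subset A B -> p B) /\
  (forall A B, p A -> p B -> p (fun x => A x /\ B x)) /\
  (forall A, p A \/ p (fun x => ~ A x)).

Definition in_deltaS {S : Type} (op : S -> S -> option S) (p : (S -> Prop) -> Prop) : Prop :=
  ultrafilter p /\ forall x : S, p (phi op x).

Definition sinv {S : Type} (op : S -> S -> option S) (s : S) (A : S -> Prop) : S -> Prop :=
  fun t => exists u, op s t = Some u /\ A u.

Definition ustar {S : Type} (op : S -> S -> option S) (p q : (S -> Prop) -> Prop)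
  : (S -> Prop) -> Prop :=
  fun A => p (fun s => q (sinv op s A)).

Definition idempotent {S : Type} (op : S -> S -> option S) (p : (S -> Prop) -> Prop) : Prop :=
  forall A : S -> Prop, ustar op p p A <-> p A.

(* A function with domain [n] ∈ ω and values in S is represented as the list
   [f 0; ...; f (n-1)] : list S.  Then f^x = f ++ [x]. *)
Definition snoc {S : Type} (f : list S) (x : S) : list S := f ++ [x].

Definition Bset {S : Type} (T : list S -> Prop) (f : list S) : S -> Prop :=
  fun x => T (snoc f x).

(* Main.v *)
Require Import Defs.
From Stdlib Require Import List.
Import ListNotations.

Section Aux.
Variable S : Type.
Variable op : S -> S -> option S.
Variable p : (S -> Prop) -> Prop.
Hypothesis Hu : ultrafilter p.

Definition star (D : S -> Prop) : S -> Prop := fun x => D x /\ p (sinv op x D).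

Lemma up A B : p A -> subset A B -> p B.
Proof. destruct Hu as (_ & _ & H & _). eauto. Qed.
Lemma cap A B : p A -> p B -> p (fun x => A x /\ B x).
Proof. destruct Hu as (_ & _ & _ & H & _). eauto. Qed.
Lemma nofalse : ~ p (fun _ => False).
Proof. destruct Hu as (_ & H & _). eauto. Qed.

Lemma sinv_mono x A B : subset A B -> subset (sinv op x A) (sinv op x B).
Proof. intros H t (u & H1 & H2). exists u; auto. Qed.

Hypothesis Hid : idempotent op p.
Hypothesis Hassoc : partial_assoc op.

Lemma star_in D : p D -> p (star D).
Proof. intros HD. apply cap; auto. apply Hid; auto. Qed.

Lemma star_inv D x : p D -> star D x -> p (sinv op x (star D)).
Proof.
  intros HD [Dx Hx].
  apply (up (star (sinv op x D))); [apply star_in; auto|].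
  intros y [[u [Hxy Du]] Hy]. exists u; split; auto; split; auto.
  eapply up; [exact Hy|].
  intros z [w [Hyz [v [Hxw Dv]]]]. exists v; split; auto.
  pose proof (Hassoc x y z) as E. rewrite Hxy, Hyz in E. simpl in E. congruence.
Qed.

Variable A : S -> Prop.
Definition Dl (f : list S) : S -> Prop :=
  fold_left (fun D x => fun y => star D y /\ sinv op x (star D) y) f A.

Lemma Dl_snoc f x : Dl (f ++ [x]) = fun y => star (Dl f) y /\ sinv op x (star (Dl f)) y.
Proof. unfold Dl. rewrite fold_left_app. reflexivity. Qed.

Inductive Tp : list S -> Prop :=
| Tnil : Tp []
| Tsnoc f x : Tp f -> star (Dl f) x -> Tp (f ++ [x]).

Lemma Tp_snoc f x : Tp (f ++ [x]) <-> Tp f /\ star (Dl f) x.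
Proof.
  split.
  - intros H. inversion H.
    + destruct f; discriminate.
    + apply app_inj_tail in H0. destruct H0; subst; auto.
  - intros [H1 H2]. constructor; auto.
Qed.

Hypothesis HA : p A.

Lemma Tp_props f : Tp f -> p (Dl f) /\ subset (Dl f) A /\ (forall y, In y f -> A y).
Proof.
  induction 1.
  - simpl. split; auto. split. intros y H; auto. intros y [].
  - destruct IHTp as (H1 & H2 & H3). rewrite Dl_snoc.
    split; [|split].
    + apply cap. apply star_in; auto. apply star_inv; auto.
    + intros y [[Hy _] _]. auto.
    + intros y Hy. apply in_app_or in Hy. destruct Hy as [Hy|[Hy|[]]]; auto.
      subst. apply H2. apply H0.
Qed.

End Aux.


Theorem lemma4p3 (S : Type) (op : S -> S -> option S)
  (Hassoc : partial_assoc op) (Hadeq : adequate op)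
  (p : (S -> Prop) -> Prop) (Hp : in_deltaS op p) :
  idempotent op p <->
  (forall A : S -> Prop, p A ->
     exists T : list S -> Prop,
       (exists f, T f) /\
       (forall f, T f -> forall y, In y f -> A y) /\
       (forall f, T f -> p (Bset T f)) /\
       (forall f, T f -> forall x, Bset T f x ->
          subset (Bset T (snoc f x)) (sinv op x (Bset T f)))).
Proof.
  destruct Hp as [Hu _].
  split.
  - intros Hid A HA. exists (Tp S op p A). split; [exists []; constructor|].
    split; [intros f Hf; apply (Tp_props S op p Hu Hid Hassoc A HA f Hf)|].
    split.
    + intros f Hf. apply (up S p Hu (star S op p (Dl S op p A f))).
      * apply (star_in S op p Hu Hid); apply (Tp_props S op p Hu Hid Hassoc A HA f Hf).
      * intros x Hx. unfold Bset, snoc. apply (Tp_snoc S op p A). auto.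
    + intros f Hf x Hx y Hy. unfold Bset, snoc in *.
      apply (Tp_snoc S op p A) in Hx, Hy. destruct Hx as [_ Hx]. destruct Hy as [_ [Hy _]].
      rewrite (Dl_snoc S op p A) in Hy. destruct Hy as [_ Hy].
      eapply (sinv_mono S op); [|exact Hy].
      intros z Hz. apply (Tp_snoc S op p A). auto.
  - intros H.
    assert (Hin : forall A, p A -> ustar op p p A).
    { intros A HA. destruct (H A HA) as (T & [f Hf] & Hr & HB & Hc).
      unfold ustar. apply (up S p Hu (Bset T f)); auto.
      intros x Hx. apply (up S p Hu (Bset T (snoc f x))); auto.
      intros y Hy. specialize (Hc f Hf x Hx y Hy). destruct Hc as (u & H1 & H2).
      exists u; split; auto. apply (Hr _ H2). unfold snoc. apply in_or_app; right; left; auto. }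
    intros A. split; auto.
    intros HA. pose proof Hu as (_ & _ & _ & _ & Hcl).
    destruct (Hcl A) as [|Hn]; auto. exfalso.
    apply Hin in Hn. apply (nofalse S p Hu).
    apply (up S p Hu _ _ (cap S p Hu _ _ HA Hn)).
    intros s [H1 H2]. apply (nofalse S p Hu).
    apply (up S p Hu _ _ (cap S p Hu _ _ H1 H2)).
    intros t [[u [E1 F1]] [v [E2 F2]]]. congruence.
Qed.
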